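(* In the setting described in the context (the random experiment for SA2), for every service $i\in S$ and every node $j\in V$, $\Pr(j\in X^\tau_i)\ge\delta\,(1-\exp(-x_{ij}))$.
   Context: An SPSC instance: finite sets $S$ (services), $V$ (nodes), $U$ (users); sizes $s_i>0$; capacities $c_j>0$; for each user $k$ a service $i_k\in S$, a set $T_k\subseteq V$, a reward $w_k>0$. Let $\{x_{ij}\},\{y_k\}$ be an optimal solution of the LP with nonnegative variables: maximize $\sum_ky_kw_k$ s.t. $y_k\le\sum_{j\in T_k}x_{i_kj}$, $y_k\le1$; $\sum_ix_{ij}s_i\le c_j$; $x_{ij}=0$ if $s_i>c_j$; $0\le x_{ij}\le1$. Let $\beta:=1/4,\gamma:=1/2,\delta:=1/4$, $\mathbb N=\{1,2,\dots\}$. For $j\in V$: $P_j^\oplus:=\{i:c_j/2<s_i\le c_j\}$, $P_j^\ominus:=\{i:c_j/4<s_i\le c_j/2\}$, $P_j^q:=\{i:\gamma^qc_j\beta<s_i\le\gamma^{q-1}c_j\beta\}$ ($q\in\mathbb N$); $d_j^q:=\sum_{i\in P_j^q}x_{ij}$ for $q\in\mathbb N\cup\{\oplus,\ominus\}$; $v_j:=\delta c_j/\sum_{i:s_i\le c_j\beta}s_ix_{ij}$; $n_j^q:=\lceil v_jd_j^q\rceil$; $h_j:=d_j^\ominus$ if $d_j^\ominus<2$, else $d_j^\ominus/2$. A construction map $\zeta:V\to\{1,2,3\}$ has slot set $\Lambda(\zeta)$ (slot $\sigma$ has node $\nu(\sigma)$, class $\kappa(\sigma)$): for each $j$, one slot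 of class $\oplus$ if $\zeta(j)=1$; two slots of class $\ominus$ if $\zeta(j)=2$; for each $q\in\mathbb N$, $n_j^q$ slots of class $q$ if $\zeta(j)=3$; no other slots on $j$. A slot allocation of $\Lambda$ is $\tau:\Lambda\to S$ with $\tau(\sigma)\in P^{\kappa(\sigma)}_{\nu(\sigma)}$; $X^\tau_i:=\{j:\exists\sigma\in\Lambda,\nu(\sigma)=j,\tau(\sigma)=i\}$. Random experiment: $\zeta(j)$ independent over $j$, equal to $1,2,3$ with probabilities $\delta d_j^\oplus,\ \delta h_j,\ 1-\delta d_j^\oplus-\delta h_j$; given $\zeta$, each slot $\sigma\in\Lambda(\zeta)$ independently gets $\tau(\sigma)=i$ with probability $x_{i\nu(\sigma)}/d^{\kappa(\sigma)}_{\nu(\sigma)}$, $i\in P^{\kappa(\sigma)}_{\nu(\sigma)}$. *)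

(* Defs.v *)
From HB Require Import structures.
From mathcomp Require Import all_boot all_order all_algebra.
From mathcomp Require Import reals.
From mathcomp Require Import sequences exp.
Set Implicit Arguments. Unset Strict Implicit. Unset Printing Implicit Defensive.
Import Order.TTheory GRing.Theory Num.Theory.
Local Open Scope ring_scope.

(* Slot classes: plus (+), minus (-), and q in N = {1,2,...} (Cq q, only q>=1 used). *)
Inductive cls := Cplus | Cminus | Cq of nat.

Section SPSC.
Variables (R : realType) (S V U : finType).

Section LP.
Variables (s : S -> R) (c : V -> R) (svc : U -> S) (T : U -> {set V}) (w : U -> R).

Definition lp_feasible (x : S -> V -> R) (y : U -> R) : Prop :=
  (forall k, 0 <= y k) /\
  (forall k, y k <= \sum_(j in T k) x (svc k) j) /\
  (forall k, y k <= 1) /\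
  (forall j, \sum_(i : S) x i j * s i <= c j) /\
  (forall i j, c j < s i -> x i j = 0) /\
  (forall i j, 0 <= x i j <= 1).

Definition lp_objective (y : U -> R) : R := \sum_(k : U) y k * w k.

Definition lp_optimal (x : S -> V -> R) (y : U -> R) : Prop :=
  lp_feasible x y /\
  (forall x' y', lp_feasible x' y' -> lp_objective y' <= lp_objective y).
End LP.

Section Experiment.
Variables (s : S -> R) (c : V -> R) (x : S -> V -> R).

Definition beta : R := 1 / 4.
Definition gamma : R := 1 / 2.
Definition delta : R := 1 / 4.

Definition inP (j : V) (k : cls) (i : S) : bool :=
  match k with
  | Cplus => (c j / 2 < s i) && (s i <= c j)
  | Cminus => (c j / 4 < s i) && (s i <= c j / 2)
  | Cq q => (gamma ^+ q * c j * beta < s i) && (s i <= gamma ^+ q.-1 * c j * beta)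
  end.

Definition dd (j : V) (k : cls) : R := \sum_(i | inP j k i) x i j.

Definition vv (j : V) : R :=
  delta * c j / \sum_(i | s i <= c j * beta) s i * x i j.

Definition nn (j : V) (q : nat) : nat := `|Num.ceil (vv j * dd j (Cq q))|%N.

Definition hh (j : V) : R :=
  if dd j Cminus < 2 then dd j Cminus else dd j Cminus / 2.

(* A bound on the classes q that can be nonempty at node j: if i \in P_j^q
   then 2^(q-1) <= c_j beta / s_i, hence q <= truncn (c_j beta / s_i) + 1.
   For q > qbound j the class P_j^q is empty, d_j^q = 0 and n_j^q = 0, so
   listing only q in 1..qbound j gives exactly the slots of the paper. *)
Definition qbound (j : V) : nat := \max_(i : S) (Num.truncn (c j * beta / s i)).+1.

(* The construction map zeta : V -> {1,2,3} is encoded with values in 'I_3: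
   ordinal 0 <-> 1, ordinal 1 <-> 2, ordinal 2 <-> 3.
   slots j z = list of the classes of the slots on node j when zeta(j) = z. *)
Definition slots (j : V) (z : 'I_3) : seq cls :=
  match val z with
  | 0 => [:: Cplus]
  | 1 => [:: Cminus; Cminus]
  | _ => flatten [seq nseq (nn j q) (Cq q) | q <- iota 1 (qbound j)]
  end.

Definition zeta_prob (j : V) (z : 'I_3) : R :=
  match val z with
  | 0 => delta * dd j Cplus
  | 1 => delta * hh j
  | _ => 1 - delta * dd j Cplus - delta * hh j
  end.

Definition slot_prob (j : V) (k : cls) (i : S) : R :=
  if inP j k i then x i j / dd j k else 0.

Definition alloc_prob (j : V) (z : 'I_3) (t : (size (slots j z)).-tuple S) : R :=
  \prod_(m < size (slots j z)) slot_prob j (nth Cplus (slots j z) m) (tnth t m).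

Definition Alloc (zeta : {ffun V -> 'I_3}) : finType :=
  {dffun forall j : V, (size (slots j (zeta j))).-tuple S}.

Definition prob (E : forall zeta : {ffun V -> 'I_3}, Alloc zeta -> bool) : R :=
  \sum_(zeta : {ffun V -> 'I_3})
     (\prod_(j : V) zeta_prob j (zeta j)) *
     \sum_(tau : Alloc zeta) (\prod_(j : V) alloc_prob (tau j)) * (E zeta tau)%:R.

Definition inX (i : S) (j : V) (zeta : {ffun V -> 'I_3}) (tau : Alloc zeta) : bool :=
  i \in (tau j : seq S).

End Experiment.
End SPSC.

(* Main.v *)
Require Import Defs.
From HB Require Import structures.
From mathcomp Require Import all_boot all_order all_algebra.
From mathcomp Require Import reals.
From mathcomp Require Import sequences exp convex interval_inference.
From mathcomp Require Import lra ring.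
Import Order.TTheory GRing.Theory Num.Theory.
Local Open Scope ring_scope.

Lemma big_dffun (R : comNzRingType) (I : finType) (T_ : I -> finType)
  (F : forall i, T_ i -> R) :
  \sum_(t : {dffun forall i, T_ i}) \prod_i F i (t i) = \prod_i \sum_(x : T_ i) F i x.
Proof.
pose P_ := fun i => [ffun x : T_ i => F i x].
transitivity (\prod_i \sum_(x : T_ i) P_ i x); last first.
  by apply: eq_bigr => i _; apply: eq_bigr => x _; rewrite ffunE.
rewrite (eq_bigr (fun i => \sum_(j in tagged_with T_ i) untag 0 (P_ i) j)); last first.
  by move=> i _; rewrite (big_tag (fun i (x : T_ i) => P_ i x) i).
rewrite bigA_distr_big_dep.
rewrite -(@big_fprod R 0 1 *%R +%R I T_ P_).
rewrite (reindex (@dffun_of_fprod I T_)); last first.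
  by apply: onW_bij; exact: dffun_of_fprod_bij.
apply: eq_bigr => t _; apply: eq_bigr => i _.
by rewrite /P_ !ffunE.
Qed.

Lemma tuple_distr (R : comNzRingType) (T : finType) (n : nat) (f : 'I_n -> T -> R) :
  \sum_(t : n.-tuple T) \prod_(m < n) f m (tnth t m) = \prod_(m < n) \sum_(a : T) f m a.
Proof.
rewrite bigA_distr_bigA.
rewrite (reindex (fun g : {ffun 'I_n -> T} => [tuple g m | m < n])); last first.
  apply: onW_bij; exists (fun t : n.-tuple T => [ffun m => tnth t m]).
    by move=> g; apply/ffunP => m; rewrite ffunE tnth_mktuple.
  by move=> t; apply: eq_from_tnth => m; rewrite tnth_mktuple ffunE.
by apply: eq_bigr => g _; apply: eq_bigr => m _; rewrite tnth_mktuple.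
Qed.

Lemma prod_nseq (R : comNzRingType) (T : Type) (n : nat) (a : T) (F : T -> R) :
  \prod_(k <- nseq n a) F k = F a ^+ n.
Proof. by elim: n => [|n IH]; rewrite ?big_nil ?expr0 // big_cons IH exprS. Qed.

Lemma sum_I3 (R : comNzRingType) (f : 'I_3 -> R) :
  \sum_(z < 3) f z = f (@Ordinal 3 0 isT) + f (@Ordinal 3 1 isT) + f (@Ordinal 3 2 isT).
Proof.
rewrite !big_ord_recl big_ord0 addr0 addrA.
by congr (f _ + f _ + f _); apply: val_inj.
Qed.

Lemma in_tuple_prod (R : comNzRingType) (T : eqType) n (t : n.-tuple T) (a : T) :
  (a \in (t : seq T))%:R = 1 - \prod_(m < n) (tnth t m != a)%:R :> R.
Proof.
case: (boolP (a \in (t : seq T))) => h.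
  case/tnthP: h => m ->.
  by rewrite (bigD1 m) //= eqxx mul0r subr0.
rewrite big1 ?subrr // => m _.
by case: eqP => // e; move: h; rewrite -e mem_tnth.
Qed.

Lemma expR_conv (R : realType) (l a b : R) : 0 <= l -> l <= 1 ->
  expR (l * a + (1 - l) * b) <= l * expR a + (1 - l) * expR b.
Proof.
move=> l0 l1.
have := @convex_expR R (Itv01 l0 l1) a b.
by rewrite !convRE /=.
Qed.

Lemma one_m_exp_lam (R : realType) (l x : R) : 0 <= l -> l <= 1 ->
  l * (1 - expR (- x)) <= 1 - expR (- (l * x)).
Proof.
move=> l0 l1; have := @expR_conv R l (- x) 0 l0 l1.
rewrite mulr0 addr0 expR0 mulr1 mulrN => h.
lra.
Qed.

Lemma exp_sq_bound (R : realType) (x : R) : 0 <= x -> x <= 1 ->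
  1 - x + x * x / 4 <= expR (- x).
Proof.
move=> x0 x1.
have e : expR (- x) = expR (- (x / 2)) * expR (- (x / 2)).
  by rewrite -expRD; congr expR; field.
have h := expR_ge1Dx (- (x / 2)).
have h0 : 0 <= 1 + - (x / 2) by lra.
have := ler_pM h0 h0 h h.
rewrite e => h2; apply: le_trans h2; lra.
Qed.

Lemma anal (R : realType) (x d v u F : R) (n : nat) : 0 < x -> x <= d -> 0 < u ->
  v = (1/4) / u -> u <= F -> 1/4 <= F -> v * d <= n%:R ->
  1/4 * (1 - expR (- x)) <= F * (1 - (1 - x / d) ^+ n).
Proof.
move=> x0 xd u0 ev uF F4 vdn.
have d0 : 0 < d by lra.
have ex : d * (x / d) = x by rewrite mulrC divfK // gt_eqF.
set p := x / d in ex *.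
have p0 : 0 <= p by rewrite /p divr_ge0 // ltW.
have p1 : p <= 1 by rewrite /p ler_pdivrMr // mul1r.
have v0 : 0 <= v by rewrite ev divr_ge0 // ltW.
have h1 : (1 - p) ^+ n <= expR (- p) ^+ n.
  apply: lerXn2r; rewrite ?nnegrE ?expR_ge0 //; first lra.
  by have := expR_ge1Dx (- p); lra.
rewrite -expRM_natl in h1.
have h2 : expR (n%:R * - p) <= expR (- (v * x)).
  rewrite ler_expR mulrN lerN2 -ex mulrA.
  by apply: ler_wpM2r.
have vx0 : 0 <= v * x by apply: mulr_ge0 => //; exact: ltW.
have Y0 : expR (- (v * x)) <= 1 by rewrite expR_le1; lra.
have e1 : expR (- x) <= 1 by rewrite expR_le1; lra.
have step : F * (1 - expR (- (v * x))) <= F * (1 - (1 - p) ^+ n).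
  by apply: ler_wpM2l; lra.
apply: le_trans step.
have [u4|u4] := lerP (1/4) u.
  have v1 : v <= 1 by rewrite ev ler_pdivrMr //; lra.
  have h3 := @one_m_exp_lam R v x v0 v1.
  have h4 : u * (1 - expR (- (v * x))) <= F * (1 - expR (- (v * x))).
    by apply: ler_wpM2r; lra.
  apply: le_trans h4.
  have -> : 1/4 = u * v by rewrite ev; field; rewrite gt_eqF.
  by rewrite -mulrA; apply: ler_wpM2l; [exact: ltW|].
have v1 : 1 <= v by rewrite ev ler_pdivlMr //; lra.
have h5 : expR (- (v * x)) <= expR (- x).
  rewrite ler_expR lerN2 -[X in X <= _]mul1r.
  by apply: ler_wpM2r => //; exact: ltW.
have h4 : 1/4 * (1 - expR (- (v * x))) <= F * (1 - expR (- (v * x))).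
  by apply: ler_wpM2r; lra.
apply: le_trans h4.
by apply: ler_wpM2l; lra.
Qed.

Lemma minus_case1 (R : realType) (x p d E : R) : 0 < x -> x <= d -> p * d = x -> 0 <= p -> p <= 1 ->
  1 - x <= E -> 1/4 * (1 - E) <= 1/4 * d * (1 - (1 - p)^+2).
Proof. move=> *. nra. Qed.

Lemma minus_case2 (R : realType) (x p d E : R) : 0 < x -> x <= 1 -> 2 <= d -> p * d = x -> 0 <= p -> p <= 1 ->
  1 - x + x * x / 4 <= E -> 1/4 * (1 - E) <= 1/4 * (d/2) * (1 - (1 - p)^+2).
Proof. move=> *. nra. Qed.

Section Main.
Variables (R : realType) (S V : finType) (s : S -> R) (c : V -> R) (x : S -> V -> R).
Hypothesis hx : forall i j, 0 <= x i j <= 1.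

Local Notation dd := (@dd R S V s c x).
Local Notation sp := (@slot_prob R S V s c x).
Local Notation zp := (@zeta_prob R S V s c x).
Local Notation slots := (@slots R S V s c x).
Local Notation ap := (@alloc_prob R S V s c x _ _).

Definition ms j k := \sum_(i : S) sp j k i.

Lemma x_ge0 i j : 0 <= x i j. Proof. by case/andP: (hx i j). Qed.

Lemma dd_ge0 j k : 0 <= dd j k.
Proof. by apply: sumr_ge0 => i _; apply: x_ge0. Qed.

Lemma sp_ge0 j k i : 0 <= sp j k i.
Proof.
rewrite /slot_prob; case: ifP => _ //.
by apply: divr_ge0; [apply: x_ge0 | apply: dd_ge0].
Qed.

Lemma ap_ge0 j z (t : (size (slots j z)).-tuple S) : 0 <= ap t.
Proof. by apply: prodr_ge0 => m _; apply: sp_ge0. Qed.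

Lemma ms_eq j k : dd j k != 0 -> ms j k = 1.
Proof.
move=> h; rewrite /ms /slot_prob -big_mkcond /= -mulr_suml.
by rewrite divff.
Qed.

Lemma A_eq j z :
  \sum_(t : (size (slots j z)).-tuple S) ap t = \prod_(k <- slots j z) ms j k.
Proof.
rewrite /alloc_prob (@tuple_distr _ _ _ (fun m a => sp j (nth Cplus (slots j z) m) a)).
by rewrite [RHS](big_nth Cplus) big_mkord.
Qed.

Lemma B_eq j z i :
  \sum_(t : (size (slots j z)).-tuple S) ap t * (i \in (t : seq S))%:R =
  \prod_(k <- slots j z) ms j k - \prod_(k <- slots j z) (ms j k - sp j k i).
Proof.
rewrite (eq_bigr (fun t => ap t - ap t * \prod_(m < size (slots j z)) (tnth t m != i)%:R)); last by move=> t _; rewrite (@in_tuple_prod R S _ t i) mulrBr mulr1.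
rewrite sumrB A_eq; congr (_ - _).
rewrite (eq_bigr (fun t : (size (slots j z)).-tuple S => \prod_(m < size (slots j z))
   (sp j (nth Cplus (slots j z) m) (tnth t m) * (tnth t m != i)%:R))); last first.
  by move=> t _; rewrite /alloc_prob big_split.
rewrite (@tuple_distr _ _ _ (fun m a => sp j (nth Cplus (slots j z) m) a * (a != i)%:R)).
rewrite [RHS](big_nth Cplus) big_mkord.
apply: eq_bigr => m _.
rewrite /ms (bigD1 i) //= [in RHS](bigD1 i) //= eqxx mulr0 add0r.
rewrite (eq_bigr (fun a => sp j (nth Cplus (slots j z) m) a)); first by lra.
by move=> a ->; rewrite mulr1.
Qed.

Lemma B_ge0 j z i :
  0 <= \sum_(t : (size (slots j z)).-tuple S) ap t * (i \in (t : seq S))%:R.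
Proof. by apply: sumr_ge0 => t _; apply: mulr_ge0; [apply: ap_ge0|apply: ler0n]. Qed.


Definition z0 := @Ordinal 3 0 isT.
Definition z1 := @Ordinal 3 1 isT.
Definition z2 := @Ordinal 3 2 isT.

Lemma prod_slots2 j (g : cls -> R) :
  \prod_(k <- slots j z2) g k =
  \prod_(q <- iota 1 (@qbound R S V s c j)) g (Cq q) ^+ (@nn R S V s c x j q).
Proof.
rewrite /Defs.slots /= big_flatten big_map.
by apply: eq_bigr => q _; rewrite prod_nseq.
Qed.

Lemma nn_dd j q : (0 < @nn R S V s c x j q)%N -> dd j (Cq q) != 0.
Proof.
move=> h; apply/eqP => e; move: h.
by rewrite /nn e mulr0 ceil0.
Qed.

Lemma mass j : \sum_(z < 3) zp j z * \prod_(k <- slots j z) ms j k = 1.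
Proof.
rewrite sum_I3.
have e0 : zp j z0 * \prod_(k <- slots j z0) ms j k = delta R * dd j Cplus.
  rewrite /zeta_prob /Defs.slots /= big_seq1.
  have [->|h] := eqVneq (dd j Cplus) 0; first by rewrite !mulr0 mul0r.
  by rewrite ms_eq // mulr1.
have e1 : zp j z1 * \prod_(k <- slots j z1) ms j k = delta R * hh s c x j.
  rewrite /zeta_prob /Defs.slots /= big_cons big_seq1.
  have [e|h] := eqVneq (dd j Cminus) 0.
    by rewrite /hh e mul0r ltr0n /= mulr0 mul0r.
  by rewrite ms_eq // !mulr1.
have e2 : \prod_(k <- slots j z2) ms j k = 1.
  rewrite prod_slots2 big1_seq // => q _.
  case: (posnP (@nn R S V s c x j q)) => [->|h]; first by rewrite expr0.
  by rewrite ms_eq ?expr1n // nn_dd.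
rewrite e0 e1 e2 mulr1 /zeta_prob /=.
lra.
Qed.

Definition As j z := \sum_(t : (size (slots j z)).-tuple S) ap t.
Definition Bs j z i := \sum_(t : (size (slots j z)).-tuple S) ap t * (i \in (t : seq S))%:R.

Lemma prob_factor i j :
  @prob R S V s c x (@inX R S V s c x i j) = \sum_(z < 3) zp j z * Bs j z i.
Proof.
pose G j' z := if j' == j then Bs j' z i else As j' z.
have inner : forall zeta : {ffun V -> 'I_3},
  \sum_(tau : Alloc s c x zeta) (\prod_(j' : V) ap (tau j')) * (@inX R S V s c x i j zeta tau)%:R
  = \prod_(j' : V) G j' (zeta j').
  move=> zeta.
  transitivity (\sum_(tau : Alloc s c x zeta) \prod_(j' : V) (ap (tau j') *
      (if j' == j then (i \in (tau j' : seq S))%:R else 1))).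
    apply: eq_bigr => tau _; rewrite big_split /=; congr (_ * _).
    rewrite (bigD1 j) //= eqxx big1 ?mulr1 // => j' /negbTE -> //.
  rewrite (@big_dffun R V (fun j' => (size (slots j' (zeta j'))).-tuple S)
     (fun j' t => ap t * (if j' == j then (i \in (t : seq S))%:R else 1))).
  apply: eq_bigr => j' _; rewrite /G /As /Bs; case: (j' == j) => //.
  by apply: eq_bigr => t _; rewrite mulr1.
rewrite /prob.
rewrite (eq_bigr (fun zeta : {ffun V -> 'I_3} => \prod_(j' : V) (zp j' (zeta j') * G j' (zeta j')))); last first.
  by move=> zeta _; rewrite inner big_split.
rewrite -(bigA_distr_bigA (fun j' z => zp j' z * G j' z)).
rewrite (bigD1 j) //=.
have -> : \prod_(j' | j' != j) \sum_(z < 3) zp j' z * G j' z = 1.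
  apply: big1 => j' /negbTE hj; rewrite -[RHS](mass j'); apply: eq_bigr => z _.
  by rewrite /G hj /As A_eq.
by rewrite mulr1; apply: eq_bigr => z _; rewrite /G eqxx.
Qed.

End Main.

Section Node.
Variables (R : realType) (S V : finType) (s : S -> R) (c : V -> R) (x : S -> V -> R).
Hypothesis hx : forall i j, 0 <= x i j <= 1.
Hypothesis hs : forall i, 0 < s i.
Hypothesis hc : forall j, 0 < c j.
Hypothesis hcap : forall j, \sum_(i : S) x i j * s i <= c j.
Hypothesis hbig : forall i j, c j < s i -> x i j = 0.

Local Notation dd := (@dd R S V s c x).
Local Notation sp := (@slot_prob R S V s c x).
Local Notation zp := (@zeta_prob R S V s c x).
Local Notation slots := (@slots R S V s c x).
Local Notation hh := (@hh R S V s c x).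
Local Notation inP := (@inP R S V s c).

Let xge0 i j : 0 <= x i j := @x_ge0 R S V x hx i j.
Let ddge0 j k : 0 <= dd j k := @dd_ge0 R S V s c x hx j k.

Definition Ssm j := \sum_(i | s i <= c j * beta R) s i * x i j.

Lemma Ssm_ge0 j : 0 <= Ssm j.
Proof. apply: sumr_ge0 => i _; apply: mulr_ge0; [exact: ltW | exact: xge0]. Qed.

Lemma cap_split j : c j / 2 * dd j Cplus + c j / 4 * dd j Cminus + Ssm j <= c j.
Proof.
apply: le_trans (hcap j).
rewrite /Defs.dd /Ssm !mulr_sumr [X in X + _ + _]big_mkcond [X in _ + X + _]big_mkcond [X in _ + X <= _]big_mkcond /= -!big_split /=.
apply: ler_sum => i _.
have := xge0 i j; have := hs i; have := hc j.
rewrite /Defs.inP /beta.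
case: ifP => [/andP[? ?]|?]; case: ifP => [/andP[? ?]|?]; case: ifP => ? ; move=> *; nra.
Qed.

Lemma dd_ge_x j k i : inP j k i -> x i j <= dd j k.
Proof.
move=> h; rewrite /Defs.dd (bigD1 i) //= lerDl.
by apply: sumr_ge0 => a _; apply: xge0.
Qed.

Lemma F_bounds j :
  Ssm j / c j <= 1 - delta R * dd j Cplus - delta R * hh j /\
  1 / 4 <= 1 - delta R * dd j Cplus - delta R * hh j.
Proof.
have h := cap_split j; have hcj := hc j.
have hu : c j * (dd j Cplus / 2 + dd j Cminus / 4 + Ssm j / c j) <= c j * 1.
  have -> : c j * (dd j Cplus / 2 + dd j Cminus / 4 + Ssm j / c j) =
     c j / 2 * dd j Cplus + c j / 4 * dd j Cminus + Ssm j.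
    by field; rewrite gt_eqF.
  by rewrite mulr1.
rewrite ler_pM2l // in hu.
have := ddge0 j Cplus; have := ddge0 j Cminus; have := Ssm_ge0 j.
have : 0 <= Ssm j / c j by apply: divr_ge0 => //; [exact: Ssm_ge0 | exact: ltW].
rewrite /Defs.hh /delta; case: ifP => ? *; split; lra.
Qed.


Lemma find_q j i : s i <= c j * beta R ->
  exists q, [/\ (0 < q)%N, (q <= @qbound R S V s c j)%N & inP j (Cq q) i].
Proof.
move=> hsm.
have si0 := hs i.
set r := c j * beta R / s i.
have hr1 : 1 <= r by rewrite /r ler_pdivlMr // mul1r.
have hr0 : 0 <= r by lra.
have ecb : c j * beta R = r * s i by rewrite /r divfK // gt_eqF.
have ht : (0 < Num.truncn r)%N by rewrite truncn_gt0.
set t := Num.truncn r in ht.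
have he1 : (2 ^ trunc_log 2 t <= t)%N := @trunc_logP 2 t isT ht.
have he2 : (t < 2 ^ (trunc_log 2 t).+1)%N := @trunc_log_ltn 2 t isT.
set e := trunc_log 2 t in he1 he2.
have htr : t%:R <= r by rewrite /t truncn_le.
have hrt : r < t.+1%:R := truncnS_gt r.
exists e.+1; split => //.
  rewrite /qbound; apply: leq_trans (leq_bigmax i); rewrite ltnS.
  exact: leq_trans (ltnW (ltn_expl e (isT : (1 < 2)%N))) he1.
rewrite /Defs.inP /= /gamma div1r !exprVn -!mulrA ecb.
have K1 : 0 < 2 ^+ e.+1 :> R by rewrite exprn_gt0.
have K2 : 0 < 2 ^+ e :> R by rewrite exprn_gt0.
apply/andP; split.
  rewrite mulrA -[X in _ < X]mul1r ltr_pM2r // mulrC ltr_pdivrMr // mul1r.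
  apply: lt_le_trans hrt _.
  by rewrite -natrX ler_nat.
rewrite mulrA -[X in X <= _]mul1r ler_pM2r // mulrC ler_pdivlMr // mul1r.
apply: le_trans htr.
by rewrite -natrX ler_nat.
Qed.

Lemma disj_q j i a b : (a < b)%N -> inP j (Cq a) i -> inP j (Cq b) i -> False.
Proof.
move=> hab /andP[h1 _] /andP[_ h2].
have g0 : 0 <= gamma R by rewrite /gamma; lra.
have g1 : gamma R <= 1 by rewrite /gamma; lra.
have hg : gamma R ^+ b.-1 <= gamma R ^+ a.
  by apply: ler_wiXn2l => //; rewrite -ltnS prednK //; exact: leq_ltn_trans hab.
have cb : 0 <= c j * beta R by apply: mulr_ge0; [exact: ltW | rewrite /beta; lra].
have h3 := ler_wpM2r cb hg.
move: h1 h2; rewrite -!mulrA => h1 h2.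
lra.
Qed.

Lemma disj_q' j i a b : inP j (Cq a) i -> inP j (Cq b) i -> a = b.
Proof.
move=> ha hb; case: (ltngtP a b) => // h.
  by case: (disj_q _ _ _ _ h ha hb).
by case: (disj_q _ _ _ _ h hb ha).
Qed.

Lemma nn_ge j q : 0 <= @vv R S V s c x j * dd j (Cq q) ->
  @vv R S V s c x j * dd j (Cq q) <= (@nn R S V s c x j q)%:R.
Proof.
move=> h; rewrite /nn natr_absz ger0_norm ?ceil_ge //.
by rewrite ceil_ge0; lra.
Qed.

Lemma node_main i j :
  delta R * (1 - expR (- x i j)) <= @prob R S V s c x (@inX R S V s c x i j).
Proof.
rewrite (@prob_factor R S V s c x i j) sum_I3.
change (delta R * (1 - expR (- x i j)) <=
  zp j z0 * @Bs R S V s c x j z0 i + zp j z1 * @Bs R S V s c x j z1 i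
  + zp j z2 * @Bs R S V s c x j z2 i).
have [Fu F4] := F_bounds j.
have hdp := ddge0 j Cplus; have hdm := ddge0 j Cminus.
have hh0 : 0 <= hh j by rewrite /Defs.hh; case: ifP => _; lra.
have H0 : 0 <= zp j z0 * @Bs R S V s c x j z0 i.
  apply: mulr_ge0; last exact: (@B_ge0 R S V s c x hx).
  by rewrite /zeta_prob /= /delta; lra.
have H1 : 0 <= zp j z1 * @Bs R S V s c x j z1 i.
  apply: mulr_ge0; last exact: (@B_ge0 R S V s c x hx).
  by rewrite /zeta_prob /= /delta; lra.
have H2 : 0 <= zp j z2 * @Bs R S V s c x j z2 i.
  apply: mulr_ge0; last exact: (@B_ge0 R S V s c x hx).
  by rewrite /zeta_prob /=; lra.
have [x0|xpos] := eqVneq (x i j) 0.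
  by rewrite x0 oppr0 expR0 subrr mulr0; lra.
have {xpos} xpos : 0 < x i j by rewrite lt_neqAle eq_sym xpos xge0.
have x1 : x i j <= 1 by case/andP: (hx i j).
have hsc : s i <= c j.
  by rewrite leNgt; apply/negP => /hbig e; rewrite e in xpos; lra.
have hex := expR_ge1Dx (- x i j).
case: (ltrP (c j / 2) (s i)) => h1.
  have hin : inP j Cplus i by rewrite /Defs.inP h1 hsc.
  have hd := dd_ge_x _ _ _ hin.
  suff : delta R * (1 - expR (- x i j)) <= zp j z0 * @Bs R S V s c x j z0 i by lra.
  rewrite /Bs (@B_eq R S V s c x j z0 i) /Defs.slots /z0 /= !big_seq1 /slot_prob hin.
  rewrite opprB addrCA subrr addr0 /zeta_prob /=.
  have -> : delta R * dd j Cplus * (x i j / dd j Cplus) = delta R * x i j.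
    by field; rewrite gt_eqF //; lra.
  rewrite /delta; lra.
case: (ltrP (c j / 4) (s i)) => h2.
  have hin : inP j Cminus i by rewrite /Defs.inP h1 h2.
  have hd := dd_ge_x _ _ _ hin.
  have hdn : dd j Cminus != 0 by rewrite gt_eqF //; lra.
  suff : delta R * (1 - expR (- x i j)) <= zp j z1 * @Bs R S V s c x j z1 i by lra.
  rewrite /Bs (@B_eq R S V s c x j z1 i) /Defs.slots /z1 /= !big_cons !big_nil !mulr1 /slot_prob hin.
  rewrite (@ms_eq R S V s c x j Cminus hdn) /zeta_prob /= mul1r -expr2.
  have pd : x i j / dd j Cminus * dd j Cminus = x i j by rewrite divfK.
  have p0 : 0 <= x i j / dd j Cminus by rewrite divr_ge0 //; lra.
  have p1 : x i j / dd j Cminus <= 1 by rewrite ler_pdivrMr; lra.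
  rewrite /Defs.hh; case: ifP => hlt.
    by apply: (@minus_case1 R (x i j)) => //; lra.
  apply: (@minus_case2 R (x i j)) => //; first by move: hlt => /negbT; rewrite -leNgt.
  exact: exp_sq_bound.
have hsm : s i <= c j * beta R by rewrite /beta; lra.
have [q [q0 qb hin]] := find_q _ _ hsm.
have hd := dd_ge_x _ _ _ hin.
have hdn : dd j (Cq q) != 0 by rewrite gt_eqF //; lra.
suff : delta R * (1 - expR (- x i j)) <= zp j z2 * @Bs R S V s c x j z2 i by lra.
rewrite /Bs (@B_eq R S V s c x j z2 i) /zeta_prob /=.
have -> : \prod_(k <- slots j z2) @ms R S V s c x j k = 1.
  rewrite (@prod_slots2 R S V s c x) big1_seq // => q' _.
  case: (posnP (@nn R S V s c x j q')) => [->|h]; first by rewrite expr0.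
  by rewrite (@ms_eq R S V s c x) ?expr1n // (@nn_dd R S V s c x).
have -> : \prod_(k <- slots j z2) (@ms R S V s c x j k - sp j k i) =
    (1 - x i j / dd j (Cq q)) ^+ (@nn R S V s c x j q).
  rewrite (@prod_slots2 R S V s c x) (bigD1_seq q) /=; last exact: iota_uniq.
    rewrite big1_seq ?mulr1.
      by rewrite (@ms_eq R S V s c x) // /slot_prob hin.
    move=> q' /andP[hq' _].
    case: (posnP (@nn R S V s c x j q')) => [->|h]; first by rewrite expr0.
    rewrite (@ms_eq R S V s c x) ?(@nn_dd R S V s c x) // /slot_prob.
    case: ifP => hq.
      by rewrite (disj_q' _ _ _ _ hin hq) eqxx in hq'.
    by rewrite subr0 expr1n.
  by rewrite mem_iota q0 /= add1n ltnS.
have Sp : 0 < Ssm j.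
  rewrite /Ssm (bigD1 i) //=.
  have : 0 <= \sum_(a | (s a <= c j * beta R) && (a != i)) s a * x a j.
    by apply: sumr_ge0 => a _; apply: mulr_ge0; [exact: ltW | exact: xge0].
  have : 0 < s i * x i j by apply: mulr_gt0.
  lra.
have hcj := hc j.
have upos : 0 < Ssm j / c j by apply: divr_gt0.
have ev : @vv R S V s c x j = (1/4) / (Ssm j / c j).
  change (delta R * c j / Ssm j = (1/4) / (Ssm j / c j)).
  by rewrite /delta; field; rewrite !gt_eqF.
have vdn := nn_ge j q.
have v0 : 0 <= @vv R S V s c x j by rewrite ev divr_ge0 //; lra.
have vdn' : @vv R S V s c x j * dd j (Cq q) <= (@nn R S V s c x j q)%:R.
  by apply: vdn; apply: mulr_ge0.
exact: (@anal R (x i j) (dd j (Cq q)) (@vv R S V s c x j) (Ssm j / c j) _ _ xpos hd upos ev Fu F4 vdn').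
Qed.

End Node.

Theorem theorem17 (R : realType) (S V U : finType)
  (s : S -> R) (c : V -> R) (svc : U -> S) (T : U -> {set V}) (w : U -> R)
  (x : S -> V -> R) (y : U -> R)
  (hs : forall i, 0 < s i) (hc : forall j, 0 < c j) (hw : forall k, 0 < w k)
  (hopt : lp_optimal s c svc T w x y)
  (i : S) (j : V) :
  delta R * (1 - expR (- x i j)) <= @prob R S V s c x (@inX R S V s c x i j).
Proof.
case: hopt => [[_ [_ [_ [hcap [hbig hx]]]]] _].
exact: (@node_main R S V s c x hx hs hc hcap hbig i j).
Qed.
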